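(* Let $N$ be a positive integer and $t>-\log N$. For integers $n\ge N$ let $$\eta_n(t,N)=\sum_{k=N}^{n}\Big(\frac{1}{t+\log(k+\frac12)}-\frac{1}{H_k-\gamma+t}\Big),$$ and set $\eta_{N-1}(t,N)=0$. (1) The sequence $(\eta_n(t,N))_{n\ge N}$ is positive, strictly increasing and bounded above; hence $\eta(t,N)=\lim_{n\to\infty}\eta_n(t,N)>0$ exists. (2) For all $n\ge N$, $\eta(t,N)-\eta_{n-1}(t,N)=\eta(t,n)$ and $$\frac1{24}\int_{n+1}^\infty\frac{dx}{x^2(t+\log x)^2}\le\eta(t,n)\le\frac1{24}\int_n^\infty\frac{dx}{x^2(t+\log x)^2}.$$ (3) For all $n\ge N$, $$\frac{1}{24(n+1)(t+\log(n+1))^2}-\frac{1}{12(n+1)(t+\log(n+1))^3}<\eta(t,N)-\eta_{n-1}(t,N)<\frac{1}{24n(t+\log n)^2}.$$ Consequently $\eta(t,N)=\eta_{n-1}(t,N)+\frac{1+o(1)}{24n(\log n)^2}$ as $n\to\infty$, and $\eta(t,N)=O\!\left(\frac1{Nt^2}\right)$ as $t\to\infty$, with implied constant independent of $N$.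
   Context: $\gamma$ is the Euler–Mascheroni constant and $H_k=\sum_{j=1}^k1/j$ is the $k$-th harmonic number. *)

(* Defs.v *)
From Stdlib Require Import Reals Lra Lia ClassicalEpsilon.
Open Scope R_scope.

Fixpoint harmonic (k : nat) : R :=
  match k with
  | O => 0
  | S m => harmonic m + / INR (S m)
  end.

Definition euler_gamma : R :=
  epsilon (inhabits 0) (fun g => Un_cv (fun n => harmonic n - ln (INR n)) g).

Definition eta_term (t : R) (k : nat) : R :=
  / (t + ln (INR k + / 2)) - / (harmonic k - euler_gamma + t).

(* eta_n(t,N) = sum_{k=N}^{n} eta_term t k ; equals 0 when n < N
   (in particular eta_{N-1}(t,N) = 0 for N >= 1). *)
Fixpoint eta_partial (t : R) (N n : nat) : R :=
  match n with
  | O => if (N <=? 0)%nat then eta_term t 0 else 0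
  | S m => eta_partial t N m + (if (N <=? S m)%nat then eta_term t (S m) else 0)
  end.

Definition eta (t : R) (N : nat) : R :=
  epsilon (inhabits 0) (fun l => Un_cv (fun n => eta_partial t N n) l).

Definition eta_integrand (t x : R) : R := / (x ^ 2 * (t + ln x) ^ 2).

Definition improper_integral_to (f : R -> R) (a L : R) : Prop :=
  (forall b, a <= b -> inhabited (Riemann_integrable f a b)) /\
  (forall eps, eps > 0 -> exists M, forall b (pr : Riemann_integrable f a b),
      M <= b -> Rabs (RiemannInt pr - L) < eps).

(* Main.v *)
Require Import Defs.
From Stdlib Require Import Reals Lra Lia ClassicalEpsilon.
From Coquelicot Require Import Coquelicot.
Open Scope R_scope.


Lemma derP (x : R) : -1 < x < 1 ->
  derivable_pt_lim (fun x => ln (1 + x) - ln (1 - x) - 2 * x - 2 * x ^ 3 / 3) x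
    (2 * x ^ 4 / (1 - x ^ 2)).
Proof.
  intros Hx. apply is_derive_Reals.
  auto_derive.
  - split; [lra|split; [lra|exact I]].
  - assert (1 - x^2 > 0) by nra. field. repeat split; lra.
Qed.

Lemma derQ (x : R) : -1 < x < 1 ->
  derivable_pt_lim (fun x => 2 * x + 2 * x ^ 3 / (3 * (1 - x ^ 2)) - ln (1 + x) + ln (1 - x)) x
    (4 * x ^ 4 / (3 * (1 - x ^ 2) ^ 2)).
Proof.
  intros Hx. apply is_derive_Reals.
  auto_derive.
  - assert (1 - x^2 > 0) by nra. repeat split; lra.
  - assert (1 - x^2 > 0) by nra. field. repeat split; lra.
Qed.

Lemma lnP (u : R) : 0 < u < 1 -> 2 * u + 2 * u ^ 3 / 3 < ln (1 + u) - ln (1 - u).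
Proof.
  intros Hu.
  destruct (MVT_cor2 _ _ 0 u (proj1 Hu) (fun c Hc => derP c ltac:(lra))) as [c [Hc1 Hc2]].
  replace (1 + 0) with 1 in Hc1 by ring. replace (1 - 0) with 1 in Hc1 by ring.
  rewrite ln_1 in Hc1.
  assert (0 < 2 * c ^ 4 / (1 - c ^ 2) * (u - 0)).
  { apply Rmult_lt_0_compat; [|lra]. apply Rdiv_lt_0_compat. 
    assert (0 < c^2) by nra. nra. nra. }
  lra.
Qed.

Lemma lnQ (u : R) : 0 < u < 1 -> ln (1 + u) - ln (1 - u) < 2 * u + 2 * u ^ 3 / (3 * (1 - u ^ 2)).
Proof.
  intros Hu.
  destruct (MVT_cor2 _ _ 0 u (proj1 Hu) (fun c Hc => derQ c ltac:(lra))) as [c [Hc1 Hc2]].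
  replace (1 + 0) with 1 in Hc1 by ring. replace (1 - 0) with 1 in Hc1 by ring.
  rewrite ln_1 in Hc1.
  assert (0 < 4 * c ^ 4 / (3 * (1 - c ^ 2) ^ 2) * (u - 0)).
  { apply Rmult_lt_0_compat; [|lra]. apply Rdiv_lt_0_compat. 
    assert (0 < c^2) by nra. nra. assert (0 < 1 - c^2) by nra. nra. }
  replace (0 ^ 3) with 0 in Hc1 by ring. replace (2 * 0 + 2 * 0 / (3 * (1 - 0 ^ 2)) - 0 + 0) with 0 in Hc1 by (field; lra).
  lra.
Qed.


Lemma ln_lt_x (x : R) : -1 < x -> x <> 0 -> ln (1 + x) < x.
Proof.
  intros H1 H2. rewrite <- (ln_exp x) at 2. apply ln_increasing; [lra|].
  now apply exp_ineq1.
Qed.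

Lemma ln_diff_m (m : R) : 1 <= m ->
  ln (m + /2) - ln (m - /2) = ln (1 + /(2*m)) - ln (1 - /(2*m)).
Proof.
  intros Hm.
  assert (0 < /(2*m) < 1). { split. apply Rinv_0_lt_compat; lra.
    rewrite <- Rinv_1. apply Rinv_lt_contravar; lra. }
  replace (m + /2) with (m * (1 + /(2*m))) by (field; lra).
  replace (m - /2) with (m * (1 - /(2*m))) by (field; lra).
  rewrite !ln_mult; lra.
Qed.

Lemma delta_bounds (m : R) : 1 <= m ->
  / (12 * m ^ 3) < ln (m + /2) - ln (m - /2) - / m /\
  ln (m + /2) - ln (m - /2) - / m < / (12 * m * (m ^ 2 - /4)).
Proof.
  intros Hm. rewrite ln_diff_m by lra.
  set (u := /(2*m)).
  assert (Hu : 0 < u < 1). { unfold u. split. apply Rinv_0_lt_compat; lra.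
    rewrite <- Rinv_1. apply Rinv_lt_contravar; lra. }
  pose proof (lnP u Hu). pose proof (lnQ u Hu).
  assert (E1 : 2 * u = / m) by (unfold u; field; lra).
  assert (E2 : 2 * u ^ 3 / 3 = / (12 * m ^ 3)) by (unfold u; field; lra).
  assert (E3 : 2 * u ^ 3 / (3 * (1 - u ^ 2)) = / (12 * m * (m ^ 2 - /4))).
  { unfold u. field. split; [|lra]. 
    intro H'. assert (m^2 - /4 > 0) by nra. 
    assert (4 * m^2 - 1 > 0) by nra. 
    apply (Rmult_eq_compat_l (4 * m ^ 2)) in H'. field_simplify in H'; nra. }
  split; lra.
Qed.

Definition cseq (n : nat) : R := harmonic n - ln (INR n + /2).

Lemma cseq_diff (n : nat) :
  cseq n - cseq (S n) = ln ((INR n + 1) + /2) - ln ((INR n + 1) - /2) - / (INR n + 1).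
Proof.
  unfold cseq. change (harmonic (S n)) with (harmonic n + / INR (S n)). rewrite S_INR.
  replace (INR n + 1 - /2) with (INR n + /2) by field. ring.
Qed.

Lemma harmonic_ge_ln (n : nat) : ln (INR n + 1) <= harmonic n.
Proof.
  induction n as [|n IH].
  - simpl. replace (0 + 1) with 1 by ring. rewrite ln_1; lra.
  - change (harmonic (S n)) with (harmonic n + / INR (S n)). rewrite !S_INR.
    assert (Hp : 0 < INR n + 1) by (pose proof (pos_INR n); lra).
    replace (INR n + 1 + 1) with ((INR n + 1) * (1 + / (INR n + 1))) by (field; lra).
    rewrite ln_mult; [|lra|].
    2:{ pose proof (Rinv_0_lt_compat _ Hp). lra. }
    pose proof (ln_lt_x (/ (INR n + 1))).
    pose proof (Rinv_0_lt_compat _ Hp).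
    assert (ln (1 + / (INR n + 1)) < / (INR n + 1)) by (apply H; lra).
    lra.
Qed.

Lemma cseq_decr : Un_decreasing cseq.
Proof.
  intro n. pose proof (cseq_diff n).
  assert (1 <= INR n + 1) by (pose proof (pos_INR n); lra).
  destruct (delta_bounds (INR n + 1) H0) as [H1 _].
  assert (0 < / (12 * (INR n + 1) ^ 3)) by (apply Rinv_0_lt_compat; apply Rmult_lt_0_compat; [lra| apply pow_lt; lra]).
  lra.
Qed.

Lemma cseq_lb : has_lb cseq.
Proof.
  exists 0. intros x [n ->]. unfold cseq.
  pose proof (harmonic_ge_ln n).
  assert (ln (INR n + /2) <= ln (INR n + 1)).
  { pose proof (pos_INR n). apply ln_le; lra. }
  unfold opp_seq. lra.
Qed.

Lemma dseq_cv : Un_cv (fun n => ln (INR n + /2) - ln (INR n)) 0.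
Proof.
  intros eps Heps.
  destruct (INR_unbounded (/ eps)) as [M HM].
  exists (S M). intros n Hn. unfold Rdist.
  assert (Hn1 : INR (S M) <= INR n) by (apply le_INR; lia).
  rewrite S_INR in Hn1.
  assert (0 < / eps) by (apply Rinv_0_lt_compat; lra).
  assert (Hnp : 0 < INR n) by lra.
  replace (INR n + /2) with (INR n * (1 + /(2 * INR n))) by (field; lra).
  assert (Hx : 0 < /(2 * INR n)) by (apply Rinv_0_lt_compat; lra).
  rewrite ln_mult by lra.
  replace (ln (INR n) + ln (1 + / (2 * INR n)) - ln (INR n) - 0) with (ln (1 + / (2 * INR n))) by ring.
  pose proof (ln_lt_x (/ (2 * INR n)) ltac:(lra) ltac:(lra)).
  assert (0 < ln (1 + / (2 * INR n))).
  { rewrite <- ln_1. apply ln_increasing; lra. }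
  rewrite Rabs_pos_eq by lra.
  assert (/ (2 * INR n) < eps).
  { apply (Rmult_lt_reg_l (2 * INR n)); [lra|]. rewrite Rinv_r by lra.
    apply (Rmult_lt_reg_l (/eps)); [lra|].
    replace (/ eps * (2 * INR n * eps)) with (2 * INR n) by (field; lra). lra. }
  lra.
Qed.

Lemma gamma_spec : Un_cv (fun n => harmonic n - ln (INR n)) euler_gamma.
Proof.
  unfold euler_gamma. apply epsilon_spec.
  destruct (decreasing_cv _ cseq_decr cseq_lb) as [l Hl].
  exists l. replace l with (l + 0) by ring.
  eapply Un_cv_ext; [|apply (CV_plus _ _ _ _ Hl dseq_cv)].
  intro n. simpl. unfold cseq. ring.
Qed.

Lemma cseq_cv : Un_cv cseq euler_gamma.
Proof.
  replace euler_gamma with (euler_gamma - 0) by ring.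
  eapply Un_cv_ext; [|apply (CV_minus _ _ _ _ gamma_spec dseq_cv)].
  intro n. simpl. unfold cseq. ring.
Qed.


Lemma cv0_bound (v : nat -> R) (K : R) : 0 <= K ->
  (forall n, (1 <= n)%nat -> Rabs (v n) <= K / INR n) -> Un_cv v 0.
Proof.
  intros HK Hv eps Heps.
  destruct (INR_unbounded (K / eps)) as [M HM].
  exists (S M). intros n Hn. unfold Rdist. rewrite Rminus_0_r.
  assert (Hn1 : INR (S M) <= INR n) by (apply le_INR; lia).
  rewrite S_INR in Hn1.
  assert (0 <= K / eps) by (apply Rdiv_le_0_compat; lra).
  eapply Rle_lt_trans. apply Hv; lia.
  apply (Rmult_lt_reg_r (INR n)); [lra|].
  unfold Rdiv. rewrite Rmult_assoc, Rinv_l by lra. rewrite Rmult_1_r.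
  assert (K / eps * eps = K) by (field; lra).
  nra.
Qed.

Lemma inv_sq_cv (c : R) : 0 < c -> Un_cv (fun n => / (24 * (INR n + c) ^ 2)) 0.
Proof.
  intros Hc. apply (cv0_bound _ (/ (24 * c))).
  - left. apply Rinv_0_lt_compat. lra.
  - intros n Hn. assert (Hn1 : 1 <= INR n) by (apply (le_INR 1); lia).
    assert (0 < 24 * (INR n + c) ^ 2) by (apply Rmult_lt_0_compat; [lra|apply pow_lt; lra]).
    rewrite Rabs_pos_eq by (left; apply Rinv_0_lt_compat; lra).
    replace (/ (24 * c) / INR n) with (/ (24 * c * INR n)) by (field; lra).
    apply Rinv_le_contravar. nra. nra.
Qed.

Lemma incr_neg (u : nat -> R) : (forall n, u n < u (S n)) -> Un_cv u 0 -> forall n, u n < 0.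
Proof.
  intros Hi Hc n.
  assert (Un_growing u) by (intro k; left; apply Hi).
  pose proof (growing_ineq u 0 H Hc (S n)). pose proof (Hi n). lra.
Qed.

Lemma D_upper (k : nat) : cseq k - euler_gamma < / (24 * (INR k + /2) ^ 2).
Proof.
  set (a := fun n => cseq n - euler_gamma - / (24 * (INR n + /2) ^ 2)).
  assert (Ha : forall n, a n < 0).
  { apply incr_neg.
    - intro n. unfold a. pose proof (cseq_diff n).
      assert (Hm : 1 <= INR n + 1) by (pose proof (pos_INR n); lra).
      destruct (delta_bounds _ Hm) as [_ H2].
      rewrite S_INR.
      set (m := INR n + 1) in *.
      replace (INR n + /2) with (m - /2) by (unfold m; field).
      replace (INR n + 1 + /2) with (m + /2) by (unfold m; field).
      assert (Hq : m^2 - /4 > 0) by nra. assert (Hq' : m * m - /4 > 0) by nra.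
      assert (/ (12 * m * (m ^ 2 - /4)) <= / (24 * (m - /2) ^ 2) - / (24 * (m + /2) ^ 2)).
      { replace (/ (24 * (m - /2) ^ 2) - / (24 * (m + /2) ^ 2)) with (m / (12 * (m ^ 2 - /4)^2))
          by (field; repeat split; lra).
        replace (m / (12 * (m ^ 2 - /4)^2)) with (/ (12 * m * (m ^ 2 - /4)) * (m^2 / (m^2 - /4)))
          by (field; repeat split; lra).
        assert (0 < / (12 * m * (m ^ 2 - /4))).
        { apply Rinv_0_lt_compat. assert (m^2 - /4 > 0) by nra.
          apply Rmult_lt_0_compat; lra. }
        assert (1 <= m ^ 2 / (m ^ 2 - /4)).
        { assert (m^2 - /4 > 0) by nra. apply (Rmult_le_reg_r (m^2 - /4)); [lra|].
          unfold Rdiv. rewrite Rmult_assoc, Rinv_l by lra. lra. }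
        nra. }
      lra.
    - unfold a. replace 0 with (euler_gamma - euler_gamma - 0) by ring.
      apply CV_minus. apply CV_minus. apply cseq_cv. intros e He; exists 0%nat; intros; unfold Rdist; rewrite Rminus_diag, Rabs_R0; lra.
      apply inv_sq_cv. lra. }
  specialize (Ha k). unfold a in Ha. lra.
Qed.

Lemma D_lower (k : nat) : / (24 * (INR k + 1) ^ 2) < cseq k - euler_gamma.
Proof.
  set (a := fun n => / (24 * (INR n + 1) ^ 2) - (cseq n - euler_gamma)).
  assert (Ha : forall n, a n < 0).
  { apply incr_neg.
    - intro n. unfold a. pose proof (cseq_diff n).
      assert (Hm : 1 <= INR n + 1) by (pose proof (pos_INR n); lra).
      destruct (delta_bounds _ Hm) as [H2 _].
      rewrite S_INR.
      set (m := INR n + 1) in *.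
      assert (/ (24 * m ^ 2) - / (24 * (m + 1) ^ 2) < / (12 * m ^ 3)).
      { replace (/ (12 * m ^ 3)) with (/ (24 * m ^ 2) - / (24 * (m + 1) ^ 2) + (3*m+2) / (24 * m^3 * (m+1)^2))
          by (field; lra).
        assert (0 < (3*m+2) / (24 * m^3 * (m+1)^2)).
        { apply Rdiv_lt_0_compat. lra. apply Rmult_lt_0_compat; [apply Rmult_lt_0_compat|]; try lra; apply pow_lt; lra. }
        lra. }
      lra.
    - unfold a. replace 0 with (0 - (euler_gamma - euler_gamma)) by ring.
      apply CV_minus. apply inv_sq_cv. lra. apply CV_minus. apply cseq_cv.
      intros e He; exists 0%nat; intros; unfold Rdist; rewrite Rminus_diag, Rabs_R0; lra. }
  specialize (Ha k). unfold a in Ha. lra.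
Qed.


Lemma ln_gap (x : R) : 0 <= x -> / (2 * x + 3/2) < ln (x + 1) - ln (x + /2).
Proof.
  intros Hx. set (m := x + 3/4).
  assert (Hu : 0 < /(4*m) < 1). { unfold m. split. apply Rinv_0_lt_compat; lra.
    rewrite <- Rinv_1. apply Rinv_lt_contravar; lra. }
  pose proof (lnP _ Hu).
  replace (x + 1) with (m * (1 + /(4*m))) by (unfold m; field; lra).
  replace (x + /2) with (m * (1 - /(4*m))) by (unfold m; field; lra).
  rewrite !ln_mult by (unfold m in *; lra).
  assert (2 * / (4 * m) = / (2 * x + 3/2)) by (unfold m; field; lra).
  assert (0 < (/ (4 * m)) ^ 3) by (apply pow_lt; lra).
  lra.
Qed.

Lemma term_bounds (t : R) (k : nat) : 0 < t + ln (INR k + /2) ->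
  eta_integrand t (INR k + 1) / 24 < eta_term t k /\
  eta_term t k < eta_integrand t (INR k + /2) / 24.
Proof.
  intros HG. pose proof (D_upper k) as Hu. pose proof (D_lower k) as Hl.
  pose proof (pos_INR k) as Hk.
  unfold eta_term, eta_integrand, cseq in *.
  set (G := t + ln (INR k + /2)) in *.
  set (D := harmonic k - ln (INR k + / 2) - euler_gamma) in *.
  replace (harmonic k - euler_gamma + t) with (G + D) by (unfold G, D; ring).
  set (e1 := / (24 * (INR k + 1) ^ 2)) in *.
  set (e2 := / (24 * (INR k + /2) ^ 2)) in *.
  assert (He1 : 0 < e1) by (unfold e1; apply Rinv_0_lt_compat; apply Rmult_lt_0_compat; [lra|apply pow_lt; lra]).
  assert (He2 : 0 < e2) by (unfold e2; apply Rinv_0_lt_compat; apply Rmult_lt_0_compat; [lra|apply pow_lt; lra]).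
  assert (ET : / G - / (G + D) = D / (G * (G + D))) by (field; lra).
  rewrite ET.
  split.
  -
    pose proof (ln_gap (INR k) Hk) as Hg.
    set (G1 := t + ln (INR k + 1)).
    assert (He1g : e1 <= / (2 * INR k + 3/2)).
    { unfold e1. apply Rinv_le_contravar. lra. nra. }
    assert (HG1 : G + e1 <= G1) by (unfold G1, G; lra).
    assert (E1 : / ((INR k + 1) ^ 2 * G1 ^ 2) / 24 = e1 / G1 ^ 2).
    { unfold e1. field. split. assert (0 < G1) by lra. lra. lra. }
    rewrite E1.
    apply Rle_lt_trans with (e1 / (G * (G + e1))).
    + unfold Rdiv. apply Rmult_le_compat_l; [lra|]. apply Rinv_le_contravar.
      apply Rmult_lt_0_compat; lra. 
      replace (G1 ^ 2) with (G1 * G1) by ring. apply Rmult_le_compat; lra.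
    + apply (Rmult_lt_reg_r (G * (G + e1) * (G * (G + D)))).
      repeat apply Rmult_lt_0_compat; lra.
      replace (e1 / (G * (G + e1)) * (G * (G + e1) * (G * (G + D)))) with (e1 * (G * (G + D))) by (field; lra).
      replace (D / (G * (G + D)) * (G * (G + e1) * (G * (G + D)))) with (D * (G * (G + e1))) by (field; lra).
      assert (0 < G * G) by nra. nra.
  -
    assert (E2 : / ((INR k + /2) ^ 2 * G ^ 2) / 24 = e2 / G ^ 2).
    { unfold e2. field. split; lra. }
    rewrite E2.
    apply Rlt_le_trans with (D / G ^ 2).
    + unfold Rdiv. apply Rmult_lt_compat_l; [lra|]. apply Rinv_lt_contravar.
      apply Rmult_lt_0_compat; [apply pow_lt; lra|apply Rmult_lt_0_compat; lra].
      replace (G ^ 2) with (G * G) by ring. nra.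
    + unfold Rdiv. apply Rmult_le_compat_r. left. apply Rinv_0_lt_compat. apply pow_lt; lra. lra.
Qed.


Definition good (t : R) (N : nat) : Prop := (1 <= N)%nat /\ 0 < t + ln (INR N).

Lemma good_mono t N n : good t N -> (N <= n)%nat -> good t n.
Proof.
  intros [H1 H2] Hn. split; [lia|].
  assert (1 <= INR N) by (apply (le_INR 1); lia).
  assert (INR N <= INR n) by (apply le_INR; lia).
  assert (ln (INR N) <= ln (INR n)) by (apply ln_le; lra). lra.
Qed.

Lemma good_G t k : good t k -> t + ln (INR k) < t + ln (INR k + /2).
Proof.
  intros [H1 H2]. assert (1 <= INR k) by (apply (le_INR 1); lia).
  assert (ln (INR k) < ln (INR k + /2)) by (apply ln_increasing; lra). lra.
Qed.

Lemma partial_lt t N m : (m < N)%nat -> eta_partial t N m = 0.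
Proof.
  induction m as [|m IH]; intros Hm; simpl.
  - destruct (N <=? 0)%nat eqn:E; [apply Nat.leb_le in E; lia|reflexivity].
  - rewrite IH by lia. destruct (N <=? S m)%nat eqn:E; [apply Nat.leb_le in E; lia|ring].
Qed.

Lemma partial_S t N m : (N <= S m)%nat -> eta_partial t N (S m) = eta_partial t N m + eta_term t (S m).
Proof.
  intros H. simpl. apply Nat.leb_le in H. rewrite H. reflexivity.
Qed.

Lemma partial_base t N : (1 <= N)%nat -> eta_partial t N N = eta_term t N.
Proof.
  intros H. destruct N as [|p]; [lia|]. rewrite partial_S by lia. rewrite partial_lt by lia. ring.
Qed.

Lemma term_pos t k : good t k -> 0 < eta_term t k.
Proof.
  intros Hg. pose proof (good_G _ _ Hg). destruct Hg as [H1 H2].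
  destruct (term_bounds t k ltac:(lra)) as [Hl _].
  assert (1 <= INR k) by (apply (le_INR 1); lia).
  assert (0 < eta_integrand t (INR k + 1)).
  { unfold eta_integrand. apply Rinv_0_lt_compat. apply Rmult_lt_0_compat; apply pow_lt; try lra.
    assert (ln (INR k) < ln (INR k + 1)) by (apply ln_increasing; lra). lra. }
  lra.
Qed.

Lemma partial_grow t N : good t N -> Un_growing (eta_partial t N).
Proof.
  intros Hg n. simpl. destruct (N <=? S n)%nat eqn:E.
  - apply Nat.leb_le in E. pose proof (term_pos t (S n) (good_mono _ _ _ Hg E)). lra.
  - lra.
Qed.

Lemma term_tele t N k : good t N -> (N <= k)%nat ->
  eta_term t k <= (/ INR k - / (INR k + 1)) / (24 * (t + ln (INR N)) ^ 2).
Proof.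
  intros Hg Hk. pose proof (good_mono _ _ _ Hg Hk) as Hgk.
  pose proof (good_G _ _ Hgk).
  destruct (term_bounds t k ltac:(destruct Hgk; lra)) as [_ Hu].
  destruct Hg as [H1 H2].
  assert (Hk1 : 1 <= INR k) by (apply (le_INR 1); lia).
  assert (HNk : INR N <= INR k) by (apply le_INR; lia).
  assert (1 <= INR N) by (apply (le_INR 1); lia).
  assert (ln (INR N) <= ln (INR k)) by (apply ln_le; lra).
  set (c := t + ln (INR N)) in *. set (G := t + ln (INR k + /2)) in *.
  assert (Hc : c <= G) by (unfold c, G in *; lra).
  left. eapply Rlt_le_trans; [exact Hu|].
  unfold eta_integrand. fold G.
  replace ((/ INR k - / (INR k + 1)) / (24 * c ^ 2)) with (/ (24 * (INR k * (INR k + 1)) * c^2)) by (field; repeat split; lra).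
  replace (/ ((INR k + / 2) ^ 2 * G ^ 2) / 24) with (/ (24 * (INR k + / 2) ^ 2 * G ^ 2)) by (field; repeat split; lra).
  apply Rinv_le_contravar.
  - assert (0 < c^2) by (apply pow_lt; lra). assert (0 < INR k * (INR k + 1)) by nra.
    apply Rmult_lt_0_compat; lra.
  - apply Rmult_le_compat. 
    + assert (0 < INR k * (INR k + 1)) by nra. lra.
    + assert (0 < c^2) by (apply pow_lt; lra). lra.
    + nra.
    + replace (c^2) with (c*c) by ring. replace (G^2) with (G*G) by ring. apply Rmult_le_compat; lra.
Qed.

Lemma partial_bound t N : good t N -> forall n,
  eta_partial t N n <= / (24 * INR N * (t + ln (INR N)) ^ 2).
Proof.
  intros Hg. pose proof Hg as [H1 H2].
  assert (HN : 1 <= INR N) by (apply (le_INR 1); lia).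
  set (c := t + ln (INR N)) in *.
  assert (Hc2 : 0 < 24 * c ^ 2) by (assert (0 < c^2) by (apply pow_lt; lra); lra).
  assert (Hj : forall j, eta_partial t N (N + j) <= (/ INR N - / (INR (N + j) + 1)) / (24 * c ^ 2)).
  { induction j as [|j IH].
    - rewrite Nat.add_0_r, partial_base by lia. apply term_tele; auto.
    - replace (N + S j)%nat with (S (N + j)) by lia. rewrite partial_S by lia.
      pose proof (term_tele t N (S (N + j)) Hg ltac:(lia)). fold c in H.
      rewrite S_INR in *.
      replace ((/ INR N - / (INR (N + j) + 1 + 1)) / (24 * c ^ 2)) with
        ((/ INR N - / (INR (N + j) + 1)) / (24 * c ^ 2) + (/ (INR (N + j) + 1) - / (INR (N + j) + 1 + 1)) / (24 * c ^ 2)).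
      lra. pose proof (pos_INR (N+j)). field. repeat split; lra. }
  intro n. destruct (Nat.lt_ge_cases n N) as [Hn|Hn].
  - rewrite partial_lt by lia. left. apply Rinv_0_lt_compat. 
    assert (0 < c^2) by (apply pow_lt; lra). apply Rmult_lt_0_compat; [lra|]. lra.
  - replace n with (N + (n - N))%nat by lia. eapply Rle_trans; [apply Hj|].
    pose proof (pos_INR (N + (n - N))).
    assert (0 < / (INR (N + (n - N)) + 1)) by (apply Rinv_0_lt_compat; lra).
    replace (/ (24 * INR N * c ^ 2)) with (/ INR N / (24 * c^2)) by (field; split; lra).
    unfold Rdiv. apply Rmult_le_compat_r. left; apply Rinv_0_lt_compat; lra. lra.
Qed.

Lemma eta_cv t N : good t N -> Un_cv (eta_partial t N) (eta t N).
Proof.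
  intros Hg. unfold eta. apply epsilon_spec.
  destruct (growing_cv _ (partial_grow t N Hg)) as [l Hl].
  - exists (/ (24 * INR N * (t + ln (INR N)) ^ 2)). intros x [n ->]. apply partial_bound; auto.
  - exists l; exact Hl.
Qed.

Lemma partial_le_eta t N n : good t N -> eta_partial t N n <= eta t N.
Proof.
  intros Hg. apply growing_ineq. apply partial_grow; auto. apply eta_cv; auto.
Qed.

Lemma partial_pos t N n : good t N -> (N <= n)%nat -> 0 < eta_partial t N n.
Proof.
  intros Hg Hn. pose proof (partial_grow t N Hg) as Hgr.
  assert (forall j, eta_term t N <= eta_partial t N (N + j)).
  { induction j. rewrite Nat.add_0_r, partial_base by (destruct Hg; lia). lra.
    replace (N + S j)%nat with (S (N + j)) by lia. pose proof (Hgr (N+j)%nat). lra. }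
  replace n with (N + (n - N))%nat by lia. pose proof (H (n - N)%nat).
  pose proof (term_pos t N Hg). lra.
Qed.

Lemma eta_pos t N : good t N -> 0 < eta t N.
Proof.
  intros Hg. pose proof (partial_pos t N N Hg (le_n _)). pose proof (partial_le_eta t N N Hg). lra.
Qed.

Lemma partial_split t N n m : (N <= n)%nat -> (1 <= n)%nat -> (n - 1 <= m)%nat ->
  eta_partial t N m = eta_partial t N (n - 1) + eta_partial t n m.
Proof.
  intros H1 H2 H3. induction m as [|m IH].
  - replace n with 1%nat by lia. replace (1-1)%nat with 0%nat by lia.
    rewrite (partial_lt t 1 0) by lia. ring.
  - destruct (Nat.eq_dec (S m) (n - 1)) as [E|E].
    + rewrite <- E. rewrite (partial_lt t n (S m)) by lia. ring.
    + rewrite !partial_S by lia. rewrite IH by lia. ring.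
Qed.

Lemma eta_split t N n : good t N -> (N <= n)%nat -> eta t N - eta_partial t N (n - 1) = eta t n.
Proof.
  intros Hg Hn. assert (Hgn : good t n) by (eapply good_mono; eauto).
  pose proof (eta_cv t N Hg) as C1. pose proof (eta_cv t n Hgn) as C2.
  apply (UL_sequence (eta_partial t n)); auto.
  intros e He. destruct (C1 e He) as [M HM]. exists (max M n). intros k Hk.
  assert (E := partial_split t N n k Hn ltac:(destruct Hgn; lia) ltac:(lia)).
  specialize (HM k ltac:(lia)). unfold Rdist in *.
  replace (eta_partial t n k - (eta t N - eta_partial t N (n - 1))) with
    (eta_partial t N k - eta t N) by lra. exact HM.
Qed.

Lemma eta_step t n : good t n -> eta t n = eta_term t n + eta t (S n).
Proof.
  intros Hg. pose proof (eta_split t n (S n) Hg ltac:(lia)).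
  replace (S n - 1)%nat with n in H by lia. rewrite partial_base in H by (destruct Hg; lia). lra.
Qed.


Ltac posi := repeat (apply Rmult_lt_0_compat || apply Rinv_0_lt_compat || apply pow_lt); try lra.
Ltac sidec := repeat split; try lra; try (apply Rgt_not_eq; posi); try posi.

Definition ok (t x : R) := 0 < x /\ 0 < t + ln x.

Lemma ok_mono t x y : ok t x -> x <= y -> ok t y.
Proof. intros [H1 H2] H. split; [lra|]. assert (ln x <= ln y) by (apply ln_le; lra). lra. Qed.

Definition fd (t x : R) := -2 / (x^3 * (t + ln x)^2) - 2 / (x^3 * (t+ln x)^3).
Definition FF (t x : R) := / (x * (t + ln x)^2).
Definition KK (t x : R) := / (x * (t + ln x)^2) - 2 / (x * (t + ln x)^3).

Lemma der_f t x : ok t x -> is_derive (eta_integrand t) x (fd t x).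
Proof.
  intros [H1 H2]. unfold eta_integrand, fd. auto_derive. sidec.
  field. sidec.
Qed.

Lemma der_mF t x : ok t x -> is_derive (fun x => - FF t x) x (eta_integrand t x + 2 / (x^2 * (t + ln x)^3)).
Proof.
  intros [H1 H2]. unfold eta_integrand, FF. auto_derive. sidec.
  field. sidec.
Qed.

Lemma der_mK t x : ok t x -> is_derive (fun x => - KK t x) x (eta_integrand t x - 6 / (x^2 * (t + ln x)^4)).
Proof.
  intros [H1 H2]. unfold eta_integrand, KK. auto_derive. sidec.
  field. sidec.
Qed.

Lemma cont_f t x : ok t x -> continuous (eta_integrand t) x.
Proof. intros H. apply (ex_derive_continuous (eta_integrand t)). eexists. apply der_f; auto. Qed.

Lemma cont_mF' t x : ok t x -> continuous (fun x => eta_integrand t x + 2 / (x^2 * (t + ln x)^3)) x.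
Proof. intros [H1 H2]. match goal with |- continuous ?f _ => apply (ex_derive_continuous f) end. unfold eta_integrand. auto_derive. sidec. Qed.

Lemma cont_mK' t x : ok t x -> continuous (fun x => eta_integrand t x - 6 / (x^2 * (t + ln x)^4)) x.
Proof. intros [H1 H2]. match goal with |- continuous ?f _ => apply (ex_derive_continuous f) end. unfold eta_integrand. auto_derive. sidec. Qed.

Lemma exf t a b : ok t a -> a <= b -> ex_RInt (eta_integrand t) a b.
Proof.
  intros Ha Hab. apply (ex_RInt_continuous (V:=R_CompleteNormedModule)). intros z Hz.
  rewrite Rmin_left in Hz by lra. apply cont_f. eapply ok_mono; eauto. lra.
Qed.

Lemma f_pos t x : ok t x -> 0 < eta_integrand t x.
Proof. intros [H1 H2]. unfold eta_integrand. posi. Qed.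

Lemma f_decr t x y : ok t x -> x <= y -> eta_integrand t y <= eta_integrand t x.
Proof.
  intros Hx Hxy. pose proof (ok_mono _ _ _ Hx Hxy) as Hy. destruct Hx as [H1 H2], Hy as [H3 H4].
  assert (ln x <= ln y) by (apply ln_le; lra).
  unfold eta_integrand. apply Rinv_le_contravar. posi.
  apply Rmult_le_compat; [left;posi|left;posi|apply pow_incr; lra|apply pow_incr; lra].
Qed.

Lemma RInt_ge0 t a b : ok t a -> a <= b -> 0 <= RInt (eta_integrand t) a b.
Proof.
  intros Ha Hab. apply RInt_ge_0; auto. apply exf; auto.
  intros x Hx. left. apply f_pos. eapply ok_mono; eauto. lra.
Qed.

Lemma RInt_le_left t a b : ok t a -> a <= b -> RInt (eta_integrand t) a b <= (b - a) * eta_integrand t a.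
Proof.
  intros Ha Hab. 
  replace ((b - a) * eta_integrand t a) with (RInt (fun _ => eta_integrand t a) a b).
  2:{ rewrite RInt_const. reflexivity. }
  apply RInt_le; auto. apply exf; auto. apply ex_RInt_const.
  intros x Hx. apply f_decr; auto; lra.
Qed.

Lemma RInt_FF t a b : ok t a -> a <= b -> RInt (eta_integrand t) a b <= FF t a - FF t b.
Proof.
  intros Ha Hab.
  assert (HI : is_RInt (fun x => eta_integrand t x + 2 / (x^2 * (t + ln x)^3)) a b (FF t a - FF t b)).
  { replace (FF t a - FF t b) with (minus (- FF t b) (- FF t a)) by (unfold minus, plus, opp; simpl; ring).
    apply (is_RInt_derive (fun x => - FF t x)).
    - intros x Hx. rewrite Rmin_left in Hx by lra. apply der_mF. eapply ok_mono; eauto; lra.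
    - intros x Hx. rewrite Rmin_left in Hx by lra. apply cont_mF'. eapply ok_mono; eauto; lra. }
  rewrite <- (is_RInt_unique _ _ _ _ HI).
  apply RInt_le; auto. apply exf; auto. eexists; eauto.
  intros x Hx. assert (ok t x) as [H1 H2] by (eapply ok_mono; eauto; lra).
  assert (0 < 2 / (x ^ 2 * (t + ln x) ^ 3)) by (unfold Rdiv; posi). lra.
Qed.

Lemma RInt_KK t a b : ok t a -> a <= b -> KK t a - KK t b <= RInt (eta_integrand t) a b.
Proof.
  intros Ha Hab.
  assert (HI : is_RInt (fun x => eta_integrand t x - 6 / (x^2 * (t + ln x)^4)) a b (KK t a - KK t b)).
  { replace (KK t a - KK t b) with (minus (- KK t b) (- KK t a)) by (unfold minus, plus, opp; simpl; ring).
    apply (is_RInt_derive (fun x => - KK t x)).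
    - intros x Hx. rewrite Rmin_left in Hx by lra. apply der_mK. eapply ok_mono; eauto; lra.
    - intros x Hx. rewrite Rmin_left in Hx by lra. apply cont_mK'. eapply ok_mono; eauto; lra. }
  rewrite <- (is_RInt_unique _ _ _ _ HI).
  apply RInt_le; auto. eexists; eauto. apply exf; auto.
  intros x Hx. assert (ok t x) as [H1 H2] by (eapply ok_mono; eauto; lra).
  assert (0 < 6 / (x ^ 2 * (t + ln x) ^ 4)) by (unfold Rdiv; posi). lra.
Qed.


Lemma fd_incr t x y : ok t x -> x <= y -> fd t x <= fd t y.
Proof.
  intros Hx Hxy. pose proof (ok_mono _ _ _ Hx Hxy) as Hy. destruct Hx as [H1 H2], Hy as [H3 H4].
  assert (ln x <= ln y) by (apply ln_le; lra).
  unfold fd.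
  assert (A : / (y ^ 3 * (t + ln y) ^ 2) <= / (x ^ 3 * (t + ln x) ^ 2)).
  { apply Rinv_le_contravar. posi.
    apply Rmult_le_compat; [left;posi|left;posi|apply pow_incr; lra|apply pow_incr; lra]. }
  assert (B : / (y ^ 3 * (t + ln y) ^ 3) <= / (x ^ 3 * (t + ln x) ^ 3)).
  { apply Rinv_le_contravar. posi.
    apply Rmult_le_compat; [left;posi|left;posi|apply pow_incr; lra|apply pow_incr; lra]. }
  unfold Rdiv. lra.
Qed.

Lemma tangent t c x : ok t (c - /2) -> c - /2 <= x <= c + /2 ->
  eta_integrand t c + fd t c * (x - c) <= eta_integrand t x.
Proof.
  intros Ho Hx.
  assert (Hd : forall y, c - /2 <= y -> derivable_pt_lim (eta_integrand t) y (fd t y)).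
  { intros y Hy. apply is_derive_Reals. apply der_f. eapply ok_mono; eauto. }
  destruct (Rtotal_order x c) as [Hlt|[Heq|Hgt]].
  - destruct (MVT_cor2 _ _ x c Hlt (fun z Hz => Hd z ltac:(lra))) as [z [Hz1 Hz2]].
    assert (fd t z <= fd t c) by (apply fd_incr; [eapply ok_mono; eauto; lra|lra]).
    assert (fd t z * (c - x) <= fd t c * (c - x)) by (apply Rmult_le_compat_r; lra).
    lra.
  - subst. lra.
  - destruct (MVT_cor2 _ _ c x Hgt (fun z Hz => Hd z ltac:(lra))) as [z [Hz1 Hz2]].
    assert (fd t c <= fd t z) by (apply fd_incr; [eapply ok_mono; eauto; lra|lra]).
    assert (fd t c * (x - c) <= fd t z * (x - c)) by (apply Rmult_le_compat_r; lra).
    lra.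
Qed.

Lemma midpoint t c : ok t (c - /2) -> eta_integrand t c <= RInt (eta_integrand t) (c - /2) (c + /2).
Proof.
  intros Ho.
  set (A := eta_integrand t c). set (B := fd t c).
  assert (HI : is_RInt (fun x => A + B * (x - c)) (c - /2) (c + /2) A).
  { set (Phi := fun x => A * x + B * (x - c)^2 / 2).
    assert (E : minus (Phi (c + /2)) (Phi (c - /2)) = A) by (unfold Phi, minus, plus, opp; simpl; field).
    assert (HH : is_RInt (fun x => A + B * (x - c)) (c - /2) (c + /2) (minus (Phi (c + /2)) (Phi (c - /2)))).
    2:{ rewrite E in HH; exact HH. }
    apply (is_RInt_derive (V:=R_CompleteNormedModule) Phi); unfold Phi.
    - intros x _. auto_derive. auto. field.
    - intros x _. apply (ex_derive_continuous (fun x => A + B * (x - c))). auto_derive. auto. }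
  rewrite <- (is_RInt_unique _ _ _ _ HI) at 1.
  apply RInt_le. lra. eexists; eauto. apply exf; auto. lra.
  intros x Hx. apply tangent; auto. lra.
Qed.


Lemma improper_sup (f : R -> R) (a : R) :
  (forall b, a <= b -> ex_RInt f a b) ->
  (forall b1 b2, a <= b1 -> b1 <= b2 -> RInt f a b1 <= RInt f a b2) ->
  (exists B, forall b, a <= b -> RInt f a b <= B) ->
  exists L, improper_integral_to f a L /\ (forall b, a <= b -> RInt f a b <= L) /\
    (forall U, (forall b, a <= b -> RInt f a b <= U) -> L <= U).
Proof.
  intros Hint Hmono [B HB].
  set (E := fun y => exists b, a <= b /\ y = RInt f a b).
  assert (Hb : bound E) by (exists B; intros y [b [Hab ->]]; auto).
  assert (Hne : exists y, E y) by (exists (RInt f a a); exists a; split; [lra|auto]).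
  destruct (completeness E Hb Hne) as [L [HL1 HL2]].
  exists L. split; [|split].
  - split.
    + intros b Hab. constructor. apply ex_RInt_Reals_0. auto.
    + intros eps Heps.
      assert (Hnot : ~ is_upper_bound E (L - eps)).
      { intro H. specialize (HL2 _ H). lra. }
      apply Classical_Pred_Type.not_all_ex_not in Hnot. destruct Hnot as [y Hy].
      apply Classical_Prop.imply_to_and in Hy. destruct Hy as [[b0 [Hb0 ->]] Hy].
      exists b0. intros b pr Hbb. rewrite <- (RInt_Reals f a b pr).
      assert (RInt f a b0 <= RInt f a b) by (apply Hmono; lra).
      assert (RInt f a b <= L) by (apply HL1; exists b; split; [lra|auto]).
      rewrite Rabs_left1; lra.
  - intros b Hab. apply HL1. exists b; auto.
  - intros U HU. apply HL2. intros y [b [Hab ->]]. auto.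
Qed.

Lemma RInt_mono_b t a b1 b2 : ok t a -> a <= b1 -> b1 <= b2 ->
  RInt (eta_integrand t) a b1 <= RInt (eta_integrand t) a b2.
Proof.
  intros Ha H1 H2. rewrite <- (RInt_Chasles (eta_integrand t) a b1 b2).
  2: apply exf; auto. 2:{ apply exf; [eapply ok_mono; eauto|lra]. }
  pose proof (RInt_ge0 t b1 b2 ltac:(eapply ok_mono; eauto) H2).
  unfold plus; simpl. lra.
Qed.

Lemma Chasles_f t a b c : ok t a -> a <= b -> b <= c ->
  RInt (eta_integrand t) a c = RInt (eta_integrand t) a b + RInt (eta_integrand t) b c.
Proof.
  intros Ha H1 H2. rewrite <- (RInt_Chasles (eta_integrand t) a b c). reflexivity.
  apply exf; auto. apply exf; [eapply ok_mono; eauto|lra].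
Qed.

Lemma cv_le (u : nat -> R) l B : Un_cv u l -> (forall n, u n <= B) -> l <= B.
Proof.
  intros Hc Hb. destruct (Rle_dec l B) as [H|H]; auto. exfalso.
  destruct (Hc (l - B)) as [M HM]. lra. specialize (HM M (le_n _)). specialize (Hb M).
  unfold Rdist in HM. rewrite Rabs_left1 in HM; lra.
Qed.

Lemma cv_ge (u : nat -> R) l B : Un_cv u l -> (forall n, B <= u n) -> B <= l.
Proof.
  intros Hc Hb. destruct (Rle_dec B l) as [H|H]; auto. exfalso.
  destruct (Hc (B - l)) as [M HM]. lra. specialize (HM M (le_n _)). specialize (Hb M).
  unfold Rdist in HM. rewrite Rabs_right in HM; lra.
Qed.


Lemma good_ok t n : good t n -> ok t (INR n).
Proof. intros [H1 H2]. split; auto. apply (lt_INR 0); lia. Qed.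

Lemma good_G' t k : good t k -> 0 < t + ln (INR k + /2).
Proof. intros H. pose proof (good_G _ _ H). destruct H; lra. Qed.

Lemma term_upper_int t k : good t k ->
  eta_term t k < RInt (eta_integrand t) (INR k) (INR k + 1) / 24.
Proof.
  intros Hg. destruct (term_bounds t k (good_G' t k Hg)) as [_ H].
  pose proof (midpoint t (INR k + /2)).
  replace (INR k + /2 - /2) with (INR k) in H0 by ring.
  replace (INR k + /2 + /2) with (INR k + 1) in H0 by field.
  specialize (H0 (good_ok t k Hg)). lra.
Qed.

Lemma term_lower_int t k : good t k ->
  RInt (eta_integrand t) (INR k + 1) (INR k + 1 + 1) < 24 * eta_term t k.
Proof.
  intros Hg. destruct (term_bounds t k (good_G' t k Hg)) as [H _].
  assert (Ho : ok t (INR k + 1)) by (eapply ok_mono; [apply good_ok; eauto|lra]).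
  pose proof (RInt_le_left t (INR k + 1) (INR k + 1 + 1) Ho ltac:(lra)).
  replace (INR k + 1 + 1 - (INR k + 1)) with 1 in H0 by ring. lra.
Qed.

Lemma LC t n (Hg : good t n) j :
  RInt (eta_integrand t) (INR n + 1) (INR n + 1 + INR j) + 24 * eta_term t (n + j)
  <= 24 * eta_partial t n (n + j).
Proof.
  pose proof (good_ok t n Hg) as Ho.
  induction j as [|j IH].
  - simpl INR. rewrite Rplus_0_r, RInt_point, Nat.add_0_r, partial_base by (destruct Hg; lia).
    unfold zero; simpl. lra.
  - replace (n + S j)%nat with (S (n + j)) by lia. rewrite partial_S by lia.
    rewrite S_INR. 
    pose proof (pos_INR j).
    rewrite (Chasles_f t (INR n + 1) (INR n + 1 + INR j) (INR n + 1 + (INR j + 1)));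
      [|apply (ok_mono t (INR n)); auto; lra| lra | lra].
    pose proof (term_lower_int t (n + j) (good_mono t n (n + j) Hg ltac:(lia))) as HL.
    rewrite plus_INR in HL.
    replace (INR n + 1 + (INR j + 1)) with (INR n + INR j + 1 + 1) by ring.
    replace (INR n + 1 + INR j) with (INR n + INR j + 1) in * by ring.
    pose proof (term_pos t (S (n + j)) (good_mono t n (S (n + j)) Hg ltac:(lia))).
    lra.
Qed.

Lemma UC t n (Hg : good t n) j :
  eta_partial t n (n + j) <= RInt (eta_integrand t) (INR n) (INR n + INR j + 1) / 24.
Proof.
  pose proof (good_ok t n Hg) as Ho.
  induction j as [|j IH].
  - simpl INR. rewrite Rplus_0_r, Nat.add_0_r, partial_base by (destruct Hg; lia).
    left. apply term_upper_int; auto.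
  - replace (n + S j)%nat with (S (n + j)) by lia. rewrite partial_S by lia.
    rewrite S_INR.
    rewrite (Chasles_f t (INR n) (INR n + INR j + 1) (INR n + (INR j + 1) + 1)); 
      [| auto | pose proof (pos_INR j); lra | lra].
    pose proof (term_upper_int t (S (n + j)) (good_mono t n (S (n + j)) Hg ltac:(lia))).
    rewrite S_INR, plus_INR in H.
    replace (INR n + (INR j + 1) + 1) with (INR n + INR j + 1 + 1) by ring.
    lra.
Qed.

Lemma arch_nat (b : R) : exists j : nat, b <= INR j.
Proof. destruct (INR_unbounded b) as [j Hj]. exists j. lra. Qed.

Lemma part2 t n : good t n ->
  exists I1 I2,
    improper_integral_to (eta_integrand t) (INR n + 1) I1 /\
    improper_integral_to (eta_integrand t) (INR n) I2 /\
    / 24 * I1 <= eta t n <= / 24 * I2 /\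
    I2 <= FF t (INR n) /\ KK t (INR n + 1) <= I1.
Proof.
  intros Hg. pose proof (good_ok t n Hg) as Ho.
  assert (Ho1 : ok t (INR n + 1)) by (eapply ok_mono; eauto; lra).
  pose proof (eta_cv t n Hg) as Hcv.
  assert (Hpe : forall j, eta_partial t n (n + j) <= eta t n) by (intro; apply partial_le_eta; auto).
  assert (HB1 : forall b, INR n + 1 <= b -> RInt (eta_integrand t) (INR n + 1) b <= 24 * eta t n).
  { intros b Hb. destruct (arch_nat b) as [j Hj].
    pose proof (pos_INR n).
    eapply Rle_trans. apply (RInt_mono_b t (INR n + 1) b (INR n + 1 + INR j)); auto; lra.
    pose proof (LC t n Hg j). pose proof (Hpe j).
    pose proof (term_pos t (n + j) (good_mono t n (n + j) Hg ltac:(lia))). lra. }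
  destruct (improper_sup (eta_integrand t) (INR n + 1)) as [I1 [HI1 [HI1a HI1b]]].
  { intros b Hb. apply exf; auto. }
  { intros b1 b2 H1 H2. apply RInt_mono_b; auto. }
  { exists (24 * eta t n); auto. }
  destruct (improper_sup (eta_integrand t) (INR n)) as [I2 [HI2 [HI2a HI2b]]].
  { intros b Hb. apply exf; auto. }
  { intros b1 b2 H1 H2. apply RInt_mono_b; auto. }
  { exists (RInt (eta_integrand t) (INR n) (INR n + 1) + 24 * eta t n). intros b Hb.
    destruct (Rle_dec b (INR n + 1)) as [Hb1|Hb1].
    - pose proof (RInt_mono_b t (INR n) b (INR n + 1) Ho Hb Hb1).
      pose proof (eta_pos t n Hg). lra.
    - rewrite (Chasles_f t (INR n) (INR n + 1) b); auto; try lra.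
      pose proof (HB1 b ltac:(lra)). lra. }
  exists I1, I2. split; [auto|split; [auto|split; [split|split]]].
  - apply HI1b in HB1. lra.
  - assert (eta t n <= I2 / 24).
    { apply (cv_le _ _ _ Hcv). intro m. destruct (Nat.lt_ge_cases m n) as [Hm|Hm].
      - rewrite partial_lt by auto. pose proof (HI2a (INR n) ltac:(lra)).
        pose proof (RInt_ge0 t (INR n) (INR n) Ho ltac:(lra)). lra.
      - replace m with (n + (m - n))%nat by lia. eapply Rle_trans. apply UC; auto.
        pose proof (HI2a (INR n + INR (m - n) + 1) ltac:(pose proof (pos_INR (m - n)); lra)). lra. }
    lra.
  - apply HI2b. intros b Hb. pose proof (RInt_FF t (INR n) b Ho Hb).
    assert (0 < FF t b) by (destruct (ok_mono _ _ _ Ho Hb); unfold FF; posi). lra.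
  -
    destruct (Rle_dec (KK t (INR n + 1)) I1) as [H|H]; auto. exfalso.
    set (e := KK t (INR n + 1) - I1).
    destruct Ho1 as [Hp1 Hg1]. set (c := t + ln (INR n + 1)) in *.
    set (b := INR n + 1 + / (e * c^2)).
    assert (He : 0 < e) by (unfold e; lra).
    assert (Hb : INR n + 1 <= b) by (unfold b; assert (0 < / (e * c^2)) by posi; lra).
    pose proof (RInt_KK t (INR n + 1) b (conj Hp1 Hg1) Hb).
    pose proof (HI1a b Hb).
    assert (KK t b < e).
    { assert (Hob : ok t b) by exact (ok_mono t (INR n + 1) b (conj Hp1 Hg1) Hb). destruct Hob as [Hb1 Hb2].
      assert (c <= t + ln b) by (unfold c; assert (ln (INR n + 1) <= ln b) by (apply ln_le; lra); lra).
      unfold KK. assert (0 < 2 / (b * (t + ln b) ^ 3)) by (unfold Rdiv; posi).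
      assert (/ (b * (t + ln b) ^ 2) <= / (b * c^2)).
      { apply Rinv_le_contravar. posi. apply Rmult_le_compat_l. lra. apply pow_incr; lra. }
      assert (/ (b * c^2) < e).
      { assert (/ (e * c^2) < b) by (unfold b; lra).
        apply (Rmult_lt_reg_r (b * c^2)). posi. rewrite Rinv_l by (apply Rgt_not_eq; posi).
        apply (Rmult_lt_reg_l (/ (e * c^2))). posi.
        replace (/ (e * c ^ 2) * (e * (b * c ^ 2))) with b by (field; split; apply Rgt_not_eq; posi). lra. }
      lra. }
    unfold e in *. lra.
Qed.


Lemma lim_ln : is_lim_seq (fun n => ln (INR n)) p_infty.
Proof. eapply filterlim_comp; [apply is_lim_seq_INR| apply is_lim_ln_p]. Qed.

Lemma lim_ln1 : is_lim_seq (fun n => ln (INR n + 1)) p_infty.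
Proof.
  apply (is_lim_seq_ext (fun n => ln (INR (S n)))). intro n; rewrite S_INR; auto.
  apply (is_lim_seq_incr_1 (fun n => ln (INR n))). apply lim_ln.
Qed.

Lemma lim_plus_c (u : nat -> R) c : is_lim_seq u p_infty -> is_lim_seq (fun n => c + u n) p_infty.
Proof.
  intros H. eapply is_lim_seq_plus. apply is_lim_seq_const. exact H. reflexivity.
Qed.

Lemma lim_inv0 (u : nat -> R) : is_lim_seq u p_infty -> is_lim_seq (fun n => / u n) 0.
Proof.
  intros H. apply (is_lim_seq_inv u p_infty) in H. exact H. discriminate.
Qed.

Lemma lim_lndiff : is_lim_seq (fun n => ln (INR n + 1) - ln (INR n)) 0.
Proof.
  apply is_lim_seq_Reals. apply (cv0_bound _ 1). lra.
  intros n Hn. assert (Hn1 : 1 <= INR n) by (apply (le_INR 1); lia).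
  replace (INR n + 1) with (INR n * (1 + / INR n)) by (field; lra).
  assert (0 < / INR n) by (apply Rinv_0_lt_compat; lra).
  rewrite ln_mult by lra. replace (ln (INR n) + ln (1 + / INR n) - ln (INR n)) with (ln (1 + / INR n)) by ring.
  assert (0 < ln (1 + / INR n)) by (rewrite <- ln_1; apply ln_increasing; lra).
  assert (ln (1 + / INR n) < / INR n).
  { rewrite <- (ln_exp (/ INR n)) at 2. apply ln_increasing; [lra|]. apply exp_ineq1. lra. }
  rewrite Rabs_pos_eq by lra. unfold Rdiv. lra.
Qed.

Lemma lim_ratio1 t : is_lim_seq (fun n => ln (INR n) / (t + ln (INR n))) 1.
Proof.
  apply (is_lim_seq_ext_loc (fun n => 1 - t * / (t + ln (INR n)))).
  - destruct (is_lim_seq_spec (fun n => t + ln (INR n)) p_infty) as [_ HH].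
    destruct (HH (lim_plus_c _ t lim_ln) 1) as [M HM].
    exists M. intros n Hn. specialize (HM n Hn). field. lra.
  - replace (Finite 1) with (Finite (1 - t * 0)) by (f_equal; ring).
    apply is_lim_seq_minus'. apply is_lim_seq_const. apply is_lim_seq_mult'. apply is_lim_seq_const.
    apply lim_inv0. apply lim_plus_c. apply lim_ln.
Qed.

Lemma lim_ratio2 t : is_lim_seq (fun n => ln (INR n) / (t + ln (INR n + 1))) 1.
Proof.
  apply (is_lim_seq_ext_loc (fun n => 1 - (t + (ln (INR n + 1) - ln (INR n))) * / (t + ln (INR n + 1)))).
  - destruct (is_lim_seq_spec (fun n => t + ln (INR n + 1)) p_infty) as [_ HH].
    destruct (HH (lim_plus_c _ t lim_ln1) 1) as [M HM].
    exists M. intros n Hn. specialize (HM n Hn). field. lra.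
  - replace (Finite 1) with (Finite (1 - (t + 0) * 0)) by (f_equal; ring).
    apply is_lim_seq_minus'. apply is_lim_seq_const. apply is_lim_seq_mult'. 
    apply is_lim_seq_plus'. apply is_lim_seq_const. apply lim_lndiff.
    apply lim_inv0. apply lim_plus_c. apply lim_ln1.
Qed.

Lemma lim_q : is_lim_seq (fun n => INR n / (INR n + 1)) 1.
Proof.
  apply (is_lim_seq_ext (fun n => 1 - / (INR n + 1))).
  - intro n. pose proof (pos_INR n). field. lra.
  - replace (Finite 1) with (Finite (1 - 0)) by (f_equal; ring).
    apply is_lim_seq_minus'. apply is_lim_seq_const. apply lim_inv0.
    apply (is_lim_seq_ext (fun n => 1 + INR n)). intro; ring. apply lim_plus_c. apply is_lim_seq_INR.
Qed.

Lemma lim_upper t : is_lim_seq (fun n => (ln (INR n) / (t + ln (INR n))) ^ 2) 1.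
Proof.
  apply (is_lim_seq_ext (fun n => (ln (INR n) / (t + ln (INR n))) * (ln (INR n) / (t + ln (INR n))))).
  intro; ring. replace (Finite 1) with (Finite (1 * 1)) by (f_equal; ring).
  apply is_lim_seq_mult'; apply lim_ratio1.
Qed.

Lemma lim_lower t : is_lim_seq (fun n => (INR n / (INR n + 1)) *
   ((ln (INR n) / (t + ln (INR n + 1))) ^ 2 - 2 * (ln (INR n) / (t + ln (INR n + 1))) ^ 2 * / (t + ln (INR n + 1)))) 1.
Proof.
  replace (Finite 1) with (Finite (1 * (1 * 1 - 2 * (1 * 1) * 0))) by (f_equal; ring).
  apply is_lim_seq_mult'. apply lim_q.
  apply is_lim_seq_minus'.
  - apply (is_lim_seq_ext (fun n => (ln (INR n) / (t + ln (INR n + 1))) * (ln (INR n) / (t + ln (INR n + 1))))).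
    intro; ring. apply is_lim_seq_mult'; apply lim_ratio2.
  - apply is_lim_seq_mult'. apply is_lim_seq_mult'. apply is_lim_seq_const.
    apply (is_lim_seq_ext (fun n => (ln (INR n) / (t + ln (INR n + 1))) * (ln (INR n) / (t + ln (INR n + 1))))).
    intro; ring. apply is_lim_seq_mult'; apply lim_ratio2.
    apply lim_inv0. apply lim_plus_c. apply lim_ln1.
Qed.


Lemma part3 t n : good t n -> KK t (INR n + 1) / 24 < eta t n < FF t (INR n) / 24.
Proof.
  intros Hg. pose proof (good_ok t n Hg) as Ho.
  assert (Hg1 : good t (S n)) by (apply (good_mono t n); auto).
  rewrite (eta_step t n Hg).
  destruct (part2 t (S n) Hg1) as [I1 [I2 [_ [_ [[Hl Hu] [HF HK]]]]]].
  rewrite S_INR in HF, HK.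
  split.
  - pose proof (term_lower_int t n Hg).
    pose proof (RInt_KK t (INR n + 1) (INR n + 1 + 1) ltac:(apply (ok_mono t (INR n)); auto; lra) ltac:(lra)).
    lra.
  - pose proof (term_upper_int t n Hg).
    pose proof (RInt_FF t (INR n) (INR n + 1) Ho ltac:(lra)).
    lra.
Qed.

Theorem proposition3p4 :
  (forall (N : nat) (t : R), (1 <= N)%nat -> t > - ln (INR N) ->
    ((forall n, (N <= n)%nat -> eta_partial t N n > 0) /\
     (forall n, (N <= n)%nat -> eta_partial t N n < eta_partial t N (S n)) /\
     (exists B, forall n, (N <= n)%nat -> eta_partial t N n <= B) /\
     Un_cv (fun n => eta_partial t N n) (eta t N) /\ eta t N > 0) /\
    (forall n, (N <= n)%nat ->
       eta t N - eta_partial t N (n - 1) = eta t n /\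
       exists I1 I2,
         improper_integral_to (eta_integrand t) (INR n + 1) I1 /\
         improper_integral_to (eta_integrand t) (INR n) I2 /\
         / 24 * I1 <= eta t n <= / 24 * I2) /\
    (forall n, (N <= n)%nat ->
       / (24 * (INR n + 1) * (t + ln (INR n + 1)) ^ 2)
         - / (12 * (INR n + 1) * (t + ln (INR n + 1)) ^ 3)
       < eta t N - eta_partial t N (n - 1) /\
       eta t N - eta_partial t N (n - 1)
       < / (24 * INR n * (t + ln (INR n)) ^ 2)) /\
    Un_cv (fun n => (eta t N - eta_partial t N (n - 1)) * (24 * INR n * (ln (INR n)) ^ 2)) 1) /\
  (exists C T, T > 0 /\ forall (N : nat) (t : R), (1 <= N)%nat -> t >= T ->
     Rabs (eta t N) <= C / (INR N * t ^ 2)).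
Proof.
  assert (P3 : forall N t n, good t N -> (N <= n)%nat ->
       / (24 * (INR n + 1) * (t + ln (INR n + 1)) ^ 2)
         - / (12 * (INR n + 1) * (t + ln (INR n + 1)) ^ 3)
       < eta t N - eta_partial t N (n - 1) /\
       eta t N - eta_partial t N (n - 1)
       < / (24 * INR n * (t + ln (INR n)) ^ 2)).
  { intros N t n Hg Hn. rewrite (eta_split t N n Hg Hn).
    pose proof (good_mono t N n Hg Hn) as Hgn. pose proof (good_ok t n Hgn) as [Ha Hb].
    assert (Ho1 : ok t (INR n + 1)) by (apply (ok_mono t (INR n)); [split; auto|lra]).
    destruct Ho1 as [Hc Hd].
    destruct (part3 t n Hgn) as [L U].
    unfold KK, FF in *. split.
    - replace (/ (24 * (INR n + 1) * (t + ln (INR n + 1)) ^ 2) - / (12 * (INR n + 1) * (t + ln (INR n + 1)) ^ 3))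
        with ((/ ((INR n + 1) * (t + ln (INR n + 1)) ^ 2) - 2 / ((INR n + 1) * (t + ln (INR n + 1)) ^ 3)) / 24).
      exact L. field. split; lra.
    - replace (/ (24 * INR n * (t + ln (INR n)) ^ 2)) with (/ (INR n * (t + ln (INR n)) ^ 2) / 24).
      exact U. field. split; lra. }
  split.
  - intros N t HN Ht.
    assert (Hg : good t N) by (split; [auto|lra]).
    split; [|split; [|split]].
    + split; [|split; [|split; [|split]]].
      * intros n Hn. apply partial_pos; auto.
      * intros n Hn. rewrite partial_S by lia.
        pose proof (term_pos t (S n) (good_mono t N (S n) Hg ltac:(lia))). lra.
      * exists (/ (24 * INR N * (t + ln (INR N)) ^ 2)). intros n _. apply partial_bound; auto.
      * apply eta_cv; auto.
      * apply eta_pos; auto.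
    + intros n Hn. split. apply eta_split; auto.
      destruct (part2 t n (good_mono t N n Hg Hn)) as [I1 [I2 [H1 [H2 [H3 _]]]]].
      exists I1, I2. split; [auto|split; [auto|lra]].
    + intros n Hn. apply P3; auto.
    + apply is_lim_seq_Reals.
      apply (is_lim_seq_le_le_loc
        (fun n => (INR n / (INR n + 1)) *
          ((ln (INR n) / (t + ln (INR n + 1))) ^ 2 - 2 * (ln (INR n) / (t + ln (INR n + 1))) ^ 2 * / (t + ln (INR n + 1))))
        _
        (fun n => (ln (INR n) / (t + ln (INR n))) ^ 2)).
      2: apply lim_lower. 2: apply lim_upper.
      exists (N + 2)%nat. intros n Hn.
      destruct (P3 N t n Hg ltac:(lia)) as [L U].
      pose proof (good_mono t N n Hg ltac:(lia)) as Hgn. pose proof (good_ok t n Hgn) as [Ha Hb].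
      assert (Ho1 : ok t (INR n + 1)) by (apply (ok_mono t (INR n)); [split; auto|lra]).
      destruct Ho1 as [Hc Hd].
      assert (Hw : 0 <= 24 * INR n * ln (INR n) ^ 2).
      { apply Rmult_le_pos; [lra|]. apply pow2_ge_0. }
      set (e := eta t N - eta_partial t N (n - 1)) in *.
      split.
      * replace ((INR n / (INR n + 1)) *
          ((ln (INR n) / (t + ln (INR n + 1))) ^ 2 - 2 * (ln (INR n) / (t + ln (INR n + 1))) ^ 2 * / (t + ln (INR n + 1))))
          with ((/ (24 * (INR n + 1) * (t + ln (INR n + 1)) ^ 2) - / (12 * (INR n + 1) * (t + ln (INR n + 1)) ^ 3)) *
                (24 * INR n * ln (INR n) ^ 2)) by (field; split; lra).
        apply Rmult_le_compat_r; lra.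
      * replace ((ln (INR n) / (t + ln (INR n))) ^ 2) with
          (/ (24 * INR n * (t + ln (INR n)) ^ 2) * (24 * INR n * ln (INR n) ^ 2)) by (field; split; lra).
        apply Rmult_le_compat_r; lra.
  - exists (/ 24), 1. split; [lra|]. intros N t HN Ht.
    assert (HN1 : 1 <= INR N) by (apply (le_INR 1); lia).
    assert (Hl : 0 <= ln (INR N)) by (rewrite <- ln_1; apply ln_le; lra).
    assert (Hg : good t N) by (split; [auto|lra]).
    destruct (P3 N t N Hg (le_n _)) as [_ U].
    replace (N - 1)%nat with (pred N) in U by lia.
    rewrite partial_lt in U by lia. rewrite Rminus_0_r in U.
    rewrite Rabs_pos_eq by (left; apply eta_pos; auto).
    left. eapply Rlt_le_trans; [exact U|].
    replace (/ 24 / (INR N * t ^ 2)) with (/ (24 * INR N * t ^ 2)) by (field; split; lra).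
    apply Rinv_le_contravar. posi.
    apply Rmult_le_compat_l. posi. apply pow_incr; lra.
Qed.
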